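(* Let $\{X_\alpha:\alpha\in\mathscr A\}$ be a family of Banach spaces and $\kappa$ an infinite cardinal. If for every $r\in(0,1)$ there are infinitely many $\alpha\in\mathscr A$ such that $X_\alpha$ is $(r,r)$-$\mathrm{SQ}_{<\kappa}$, then $\ell_\infty(\mathscr A,X_\alpha)$ is $(<1,1)$-$\mathrm{SQ}_{<\kappa}$.
   Context: $\ell_\infty(\mathscr A,X_\alpha)$ is the Banach space of functions $x$ on $\mathscr A$ with $x(\alpha)\in X_\alpha$ and $\|x\|_\infty=\sup_\alpha\|x(\alpha)\|<\infty$. For $r,s\in(0,1]$, a Banach space $Z$ is $(r,s)$-$\mathrm{SQ}_{<\kappa}$ if for every set $A\subset S_Z$ with $|A|<\kappa$ there exists $y\in S_Z$ with $\|rx\pm sy\|\le 1$ for all $x\in A$. $Z$ is $(<1,1)$-$\mathrm{SQ}_{<\kappa}$ if it is $(t,1)$-$\mathrm{SQ}_{<\kappa}$ for every $t\in(0,1)$. *)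

(* Defs.v *)
From HB Require Import structures.
From mathcomp Require Import all_boot all_order all_algebra.
From mathcomp Require Import all_classical all_reals all_analysis.
Set Implicit Arguments. Unset Strict Implicit. Unset Printing Implicit Defensive.
Import Order.TTheory GRing.Theory Num.Theory.
Import numFieldNormedType.Exports.
Local Open Scope classical_set_scope.
Local Open Scope ring_scope.

(* |A| < kappa, where the cardinal kappa is represented by a set K of that
   cardinality (in some type U). *)
Definition card_lt {T U : Type} (A : set T) (K : set U) : Prop :=
  (A #<= K)%card /\ ~ (K #<= A)%card.

(* Generic (r,s)-SQ_{<kappa} property for a real normed space given by its
   carrier (a subset [mem] of a type Z), its norm, addition and scaling. *)
Definition SQ_gen {R : realType} {Z U : Type} (mem : set Z) (nrm : Z -> R)
  (add : Z -> Z -> Z) (scale : R -> Z -> Z) (r s : R) (K : set U) : Prop :=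
  forall A : set Z, A `<=` [set x | mem x /\ nrm x = 1] -> card_lt A K ->
  exists y : Z, mem y /\ nrm y = 1 /\
    forall x, A x -> nrm (add (scale r x) (scale s y)) <= 1 /\
                    nrm (add (scale r x) (scale (- s) y)) <= 1.

Definition SQ {R : realType} {U : Type} (Z : normedModType R) (r s : R)
  (K : set U) : Prop :=
  @SQ_gen R Z U setT (fun x => `|x|) (fun x y => x + y) (fun a x => a *: x) r s K.

Definition linf_mem {R : realType} {I : Type} (X : I -> normedModType R)
  (x : forall a, X a) : Prop := exists M : R, forall a, `|x a| <= M.
Definition linf_norm {R : realType} {I : Type} (X : I -> normedModType R)
  (x : forall a, X a) : R := sup (range (fun a => `|x a|)).
Definition linf_add {R : realType} {I : Type} (X : I -> normedModType R)
  (x y : forall a, X a) : forall a, X a := fun a => x a + y a.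
Definition linf_scale {R : realType} {I : Type} (X : I -> normedModType R)
  (c : R) (x : forall a, X a) : forall a, X a := fun a => c *: x a.

Definition SQ_linf {R : realType} {I U : Type} (X : I -> normedModType R)
  (r s : R) (K : set U) : Prop :=
  @SQ_gen R (forall a, X a) U (@linf_mem R I X) (@linf_norm R I X)
    (@linf_add R I X) (@linf_scale R I X) r s K.

Definition SQ_lt1_linf {R : realType} {I U : Type} (X : I -> normedModType R)
  (K : set U) : Prop :=
  forall t : R, 0 < t < 1 -> SQ_linf X t 1 K.

(* Main.v *)
Require Import Defs.
From HB Require Import structures.
From mathcomp Require Import all_boot all_order all_algebra.
From mathcomp Require Import all_classical all_reals all_analysis.
From mathcomp Require Import lra ring.
From Stdlib Require Import ClassicalEpsilon List.
Import Order.TTheory GRing.Theory Num.Theory.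
Import numFieldNormedType.Exports.
Local Open Scope classical_set_scope.
Local Open Scope ring_scope.

Lemma key1 (R : realType) (V : normedModType R) (u w : V) (r s : R) :
  0 < r -> 0 <= s <= r -> `|r*:u + r*:w| <= 1 -> `|r*:u - r*:w| <= 1 ->
  `|s*:u + r*:w| <= 1.
Proof.
move=> r0 /andP[s0 sr] h1 h2.
set a := (1 + s / r) / 2.
have a0 : 0 <= a by rewrite /a divr_ge0 // addr_ge0 // divr_ge0 // ltW.
have a1 : a <= 1.
  have sr1 : s / r <= 1 by rewrite ler_pdivrMr // mul1r.
  rewrite /a; lra.
have -> : s *: u + r *: w = a *: (r*:u + r*:w) + (1-a) *: (r*:w - r*:u).
  rewrite !scalerDr ?scalerN !scalerA.
  have -> : s = a * r - (1 - a) * r.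
    rewrite /a; field; exact: lt0r_neq0.
  have -> : r *: w = (a * r + (1 - a) * r) *: w by congr (_ *: _); ring.
  by rewrite scalerBl scalerDl addrACA [- _ + _]addrC.
apply: (le_trans (ler_normD _ _)).
clearbody a; rewrite !normrZ (ger0_norm a0) ger0_norm ?subr_ge0 //.
rewrite distrC.
have : a * `|r *: u + r *: w| <= a * 1 by rewrite ler_wpM2l.
have : (1 - a) * `|r *: u - r *: w| <= (1 - a) * 1 by rewrite ler_wpM2l ?subr_ge0.
lra.
Qed.

Lemma key (R : realType) (V : normedModType R) (u w : V) (r s : R) :
  0 < r -> 0 <= s <= r -> `|r*:u + r*:w| <= 1 -> `|r*:u - r*:w| <= 1 ->
  `|s*:u + r*:w| <= 1 /\ `|s*:u - r*:w| <= 1.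
Proof.
move=> r0 sr h1 h2; split; first exact: key1.
rewrite -scalerN; apply: key1 => //; rewrite scalerN ?opprK //.
Qed.

Lemma finite_In {T : Type} (l : list T) : finite_set [set x | List.In x l].
Proof.
elim: l => [|a l IH] /=.
  by rewrite (_ : [set x | False] = set0) ?finite_set0 //; apply/seteqP; split.
rewrite (_ : [set x | a = x \/ List.In x l] = [set a] `|` [set x | List.In x l]).
  by rewrite finite_setU; split => //; exact: finite_set1.
by apply/seteqP; split => x /= [->|h]; by [left|right].
Qed.

Theorem theorem6p9 (R : realType) (I : Type) (X : I -> completeNormedModType R)
  (U : Type) (K : set U) (Kinf : ~ finite_set K) :
  (forall r : R, 0 < r < 1 -> ~ finite_set [set a | SQ (X a) r r K]) ->
  SQ_lt1_linf (fun a => X a : normedModType R) K.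
Proof.
move=> Hinf t /andP[t0 t1] A Asub Acard.
pose r (n : nat) : R := 1 - (1 - t) / (n.+1)%:R.
have rt n : t <= r n.
  rewrite /r lerBrDl -lerBrDr ler_pdivrMr // ler_pMr ?subr_gt0 //.
  by rewrite ler1n.
have r1 n : r n < 1.
  by rewrite /r ltrBlDr ltrDl divr_gt0 // subr_gt0.
have r0 n : 0 < r n by exact: (lt_le_trans t0).
pose T n := [set a | SQ (X a) (r n) (r n) K].
have Tinf n : infinite_set (T n) by apply: Hinf; rewrite r0 r1.
have [a0 _] := infinite_setN0 (Tinf 0%N).
have inh : inhabited I by constructor; exact: a0.
pose ch := fix ch (n : nat) : list I := match n with
  | 0%N => nil
  | m.+1 => epsilon inh (fun a => T m a /\ ~ List.In a (ch m)) :: ch m end.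
pose f n := epsilon inh (fun a => T n a /\ ~ List.In a (ch n)).
have fP n : T n (f n) /\ ~ List.In (f n) (ch n).
  have [a [Ta Na]] := infinite_setN0 (infinite_setD (Tinf n) (finite_In (ch n))).
  exact: (epsilon_spec inh (fun a => T n a /\ ~ List.In a (ch n)) (ex_intro _ a (conj Ta Na))).
have chP n k : (k < n)%N -> List.In (f k) (ch n).
  elim: n => // n IH; rewrite ltnS leq_eqVlt => /orP[/eqP ->|/IH h] /=.
    by left.
  by right.
have finj n m : f n = f m -> n = m.
  move=> e; case: (ltngtP n m) => // h.
    by have := (fP m).2; rewrite -e; have := chP _ _ h.
  by have := (fP n).2; rewrite e; have := chP _ _ h.
have Abnd x : A x -> forall a, `|x a| <= 1.
  move=> /Asub [[M HM] n1] a.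
  rewrite -n1; apply: ub_le_sup; last by exists a.
  by exists M => _ [b _ <-].
pose P a (v : X a) := `|v| <= 1 /\
   (forall x, A x -> `|t *: x a + v| <= 1 /\ `|t *: x a - v| <= 1) /\
   (forall n, a = f n -> r n <= `|v|).
have Pex a : exists v, P a v.
  case: (pselect (exists n, a = f n)) => [[n ->]|nf]; last first.
    exists 0; split; first by rewrite normr0.
    split; last by move=> n e; exfalso; apply: nf; exists n.
    move=> x Ax; rewrite subr0 addr0 normrZ ger0_norm ?ltW //.
    apply: le_lt_trans t1; rewrite -[t in _ <= t]mulr1 ler_wpM2l ?(ltW t0) //; exact: Abnd.
  pose B := (fun x : forall a, X a => `|x (f n)|^-1 *: x (f n)) @`
              (A `&` [set x | x (f n) != 0]).
  have BA : (B #<= A)%card.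
    apply: card_le_trans (card_image_le _ _) _.
    exact: subset_card_le (@subIsetl _ _ _).
  have Bs : B `<=` [set x | setT x /\ `|x| = 1].
    move=> _ [x [_ nz] <-]; split => //.
    by rewrite normrZ normrV ?unitfE ?normr_eq0 // normr_id mulVf // normr_eq0.
  have Bc : card_lt B K.
    split; first exact: card_le_trans BA Acard.1.
    by move=> KB; apply: Acard.2; exact: card_le_trans KB BA.
  have [w [_ [w1 Hw]]] := (fP n).1 B Bs Bc.
  exists (r n *: w); split; first by rewrite normrZ w1 mulr1 gtr0_norm // ltW.
  split; last first.
    by move=> m /finj <-; rewrite normrZ w1 mulr1 gtr0_norm.
  move=> x Ax.
  have [z0|nz] := eqVneq (x (f n)) 0.
    rewrite z0 scaler0 add0r sub0r normrN normrZ w1 mulr1 gtr0_norm //.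
    by split; apply: ltW.
  set l := `|x (f n)|.
  have l0 : 0 < l by rewrite normr_gt0.
  set u := l^-1 *: x (f n).
  have xu : x (f n) = l *: u by rewrite /u scalerA divff ?gt_eqF // scale1r.
  have [h1 h2] := Hw u (ex_intro2 _ _ x (conj Ax nz) erefl).
  rewrite xu scalerA; apply: key => //.
    rewrite mulr_ge0 ?(ltW t0) ?(ltW l0) //=.
    apply: le_trans (rt n); rewrite -[t in _ <= t]mulr1 ler_wpM2l ?(ltW t0) //.
    exact: Abnd.
  by rewrite -scaleNr.
pose y a := epsilon (inhabits (0 : X a)) (P a).
have yP a : P a (y a) by exact: (epsilon_spec (inhabits (0 : X a)) (P a) (Pex a)).
have rng_ne (g : I -> R) : range g !=set0 by exists (g a0), a0.
exists y; split; first by exists 1 => a; exact: (yP a).1.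
split.
  rewrite /linf_norm; apply/eqP; rewrite eq_le; apply/andP; split.
    by apply: ge_sup => // _ [a _ <-]; exact: (yP a).1.
  have hub : has_ubound (range (fun a => `|y a|)).
    by exists 1 => _ [a _ <-]; exact: (yP a).1.
  have rs n : r n <= sup (range (fun a => `|y a|)).
    apply: le_trans ((yP (f n)).2.2 n erefl) _.
    by apply: ub_le_sup => //; exists (f n).
  rewrite leNgt; apply/negP => hs.
  set S := sup _ in hs rs.
  pose k := Num.trunc ((1 - t) / (1 - S)).
  have := truncnS_gt ((1 - t) / (1 - S)); rewrite -/k => hk.
  have := rs k; rewrite /r lerBlDr -lerBlDl.
  rewrite ler_pdivlMr // mulrC -ler_pdivlMr ?subr_gt0 //.
  by rewrite leNgt hk.
move=> x Ax; split.
  apply: ge_sup => // _ [a _ <-].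
  by rewrite /linf_add /linf_scale scale1r; exact: ((yP a).2.1 x Ax).1.
apply: ge_sup => // _ [a _ <-].
by rewrite /linf_add /linf_scale scaleN1r; exact: ((yP a).2.1 x Ax).2.
Qed.
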